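(* Let $f\in\mathbb{R}[\mathbf{x}]$, $\mathscr{A}=\operatorname{supp}(f)$, let $\mathscr{B}\subseteq\mathbb{N}^n$ be a finite set of exponents, and let $f^s_{\mathrm{ts}}$ denote the optimal value of $$\mathbf{P}^s_{\mathrm{ts}}:\quad\inf_{\mathbf{y}}\{L_{\mathbf{y}}(f):\ \mathbf{B}_{G^{(s)}}\circ\mathbf{M}_{\mathscr{B}}(\mathbf{y})\in\Pi_{G^{(s)}}(\mathbb{S}^+_{|\mathscr{B}|}),\ y_{\mathbf{0}}=1\},\qquad s\ge1,$$ and $f_{\mathrm{mom}}$ the optimal value of $\inf_{\mathbf{y}}\{L_{\mathbf{y}}(f):\mathbf{M}_{\mathscr{B}}(\mathbf{y})\succeq0,\ y_{\mathbf{0}}=1\}$. Then the sequence $(f^s_{\mathrm{ts}})_{s\ge1}$ is monotonically nondecreasing and $f^s_{\mathrm{ts}}\le f_{\mathrm{mom}}$ for all $s\ge1$.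
   Context: A graph is chordal if every cycle of length at least four has a chord; a chordal extension $G'$ of $G$ is a chordal graph on the same nodes containing all edges of $G$. For each graph $G$ a chordal extension $G'$ is fixed so that $G\subseteq H$ (inclusion of node and edge sets) implies $G'\subseteq H'$. For a graph $G$ with node set $V\subseteq\mathbb{N}^n$, $\operatorname{supp}(G)=\{\beta+\gamma:\beta=\gamma\in V\text{ or }\{\beta,\gamma\}\in E(G)\}$. $G^{\mathrm{tsp}}$ has nodes $\mathscr{B}$ and edges $\{\beta,\gamma\}$, $\beta\ne\gamma$, with $\beta+\gamma\in\mathscr{A}\cup2\mathscr{B}$. $G^{(0)}=G^{\mathrm{tsp}}$; for $s\ge1$, $F^{(s)}$ has nodes $\mathscr{B}$ and edges $\{\beta,\gamma\}$, $\beta\ne\gamma$, with $\beta+\gamma\in\operatorname{supp}(G^{(s-1)})$, and $G^{(s)}=(F^{(s)})'$. $L_{\mathbf{y}}(\sum f_\alpha\mathbf{x}^\alpha)=\sum f_\alpha y_\alpha$; $\mathbf{M}_{\mathscr{B}}(\mathbf{y})$ is indexed by $\mathscr{B}$ with $(\beta,\gamma)$-entry $y_{\beta+\gamma}$. For a graph $G$ on nodes $V$: $\mathbb{S}(G)$ is the set of symmetric matrices indexed by $V$ vanishing at $(\beta,\gamma)$ whenever $\beta\ne\gamma$ and $\{\beta,\gamma\}\notin E(G)$; $\Pi_G$ zeroes the off-pattern entries; $\Pi_G(\mathbb{S}^+_{|V|})=\{\Pi_G(\mathbf{Q}):\mathbf{Q}\succeq0\}$; $\mathbf{B}_G$ is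 the adjacency matrix of $G$ with unit diagonal; $\circ$ is the entrywise product. *)

(* Defs.v *)
From HB Require Import structures.
From mathcomp Require Import all_boot all_order all_algebra finmap.
From mathcomp Require Import all_classical all_reals all_analysis.
From mathcomp Require mpoly.
Import (canonicals) mpoly.

Set Implicit Arguments.
Unset Strict Implicit.
Unset Printing Implicit Defensive.

Import Order.TTheory GRing.Theory Num.Theory.
Local Open Scope ring_scope.
Local Open Scope fset_scope.

(* exponents alpha in N^n are the monomials 'X_{1..n} of multinomials *)
Notation expo n := (mpoly.multinom n).
Definition eadd n (a b : expo n) : expo n := mpoly.mnm_add a b.
Definition ezero n : expo n := mpoly.mnm0.

Section Graphs.
Variable V : finType.

Definition is_graph (E : rel V) : Prop := symmetric E /\ irreflexive E.

Definition subgraph (G H : rel V) : Prop := forall x y, G x y -> H x y.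

Definition chordal (E : rel V) : Prop :=
  forall c : seq V, uniq c -> (3 < size c)%N -> cycle E c ->
    exists x y, [/\ x \in c, y \in c, x != y, E x y &
                    (y != next c x) && (x != next c y)].

Definition chordal_ext_op (ext : rel V -> rel V) : Prop :=
  forall G, is_graph G ->
    [/\ is_graph (ext G), chordal (ext G), subgraph G (ext G) &
        forall H, is_graph H -> subgraph G H -> subgraph (ext G) (ext H)].
End Graphs.

Section TSSOS.
Variables (R : realType) (n : nat).
Variable B : {fset expo n}.

Definition supp_graph (G : rel B) (a : expo n) : bool :=
  [exists b : B, exists c : B, ((b == c) || G b c) && (eadd (val b) (val c) == a)].

Definition G_tsp (f : mpoly.mpoly n R) : rel B := fun b c =>
  (b != c) && ((eadd (val b) (val c) \in mpoly.msupp f) ||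
               [exists d : B, eadd (val b) (val c) == eadd (val d) (val d)]).

Definition F_of (G : rel B) : rel B := fun b c =>
  (b != c) && supp_graph G (eadd (val b) (val c)).

Fixpoint G_seq (ext : rel B -> rel B) (f : mpoly.mpoly n R) (s : nat) : rel B :=
  if s is s'.+1 then ext (F_of (G_seq ext f s')) else G_tsp f.

Definition Ly (y : expo n -> R) (f : mpoly.mpoly n R) : R :=
  \sum_(a <- mpoly.msupp f) mpoly.mcoeff a f * y a.

Definition mom_mx (y : expo n -> R) : B -> B -> R :=
  fun b c => y (eadd (val b) (val c)).

Definition psd (Q : B -> B -> R) : Prop :=
  (forall i j, Q i j = Q j i) /\
  (forall v : B -> R, 0 <= \sum_i \sum_j v i * Q i j * v j).

Definition adj_mx (G : rel B) : B -> B -> R :=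
  fun b c => if (b == c) || G b c then 1 else 0.

Definition proj_mx (G : rel B) (Q : B -> B -> R) : B -> B -> R :=
  fun b c => if (b == c) || G b c then Q b c else 0.

Definition hadamard (P Q : B -> B -> R) : B -> B -> R := fun b c => P b c * Q b c.

Definition in_proj_psd (G : rel B) (M : B -> B -> R) : Prop :=
  exists Q, psd Q /\ forall b c, M b c = proj_mx G Q b c.

Definition f_ts (ext : rel B -> rel B) (f : mpoly.mpoly n R) (s : nat) : \bar R :=
  ereal_inf [set (Ly y f)%:E | y in
    [set y : expo n -> R |
       in_proj_psd (G_seq ext f s) (hadamard (adj_mx (G_seq ext f s)) (mom_mx y))
       /\ y (ezero n) = 1]].

Definition f_mom (f : mpoly.mpoly n R) : \bar R :=
  ereal_inf [set (Ly y f)%:E | y in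
    [set y : expo n -> R | psd (mom_mx y) /\ y (ezero n) = 1]].
End TSSOS.

(* Main.v *)
Require Import Defs.
From HB Require Import structures.
From mathcomp Require Import all_boot all_order all_algebra finmap.
From mathcomp Require Import all_classical all_reals all_analysis.
From mathcomp Require mpoly.
Import (canonicals) mpoly.

Import GRing.Theory.
Local Open Scope ring_scope.

Lemma proj_sub (R : realType) (n : nat) (B : {fset expo n}) (G H : rel B)
  (M : B -> B -> R) :
  subgraph G H -> in_proj_psd H (hadamard (adj_mx R H) M) ->
  in_proj_psd G (hadamard (adj_mx R G) M).
Proof.
move=> sGH [Q [pQ hQ]]; exists Q; split => // b c.
have := hQ b c; rewrite /hadamard /adj_mx /Defs.proj_mx.
case: (boolP ((b == c) || G b c)) => [/orP h|_]; last by move=> _; rewrite mul0r.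
have -> : (b == c) || H b c.
  by case: h => [e|e]; apply/orP; [left|right; apply: sGH].
by rewrite mul1r.
Qed.

Lemma proj_full (R : realType) (n : nat) (B : {fset expo n}) (G : rel B)
  (M : B -> B -> R) :
  psd M -> in_proj_psd G (hadamard (adj_mx R G) M).
Proof.
move=> pM; exists M; split => // b c.
rewrite /hadamard /adj_mx /Defs.proj_mx.
by case: ifP => _; rewrite ?mul1r ?mul0r.
Qed.

Lemma eadd_comm {n} (a b : expo n) : eadd a b = eadd b a.
Proof. by rewrite /eadd mpoly.addmC. Qed.

Lemma F_graph {n} {B : {fset expo n}} (G : rel B) : is_graph (F_of G).
Proof.
split.
- move=> b c; rewrite /F_of eq_sym eadd_comm //.
- by move=> b; rewrite /F_of eqxx.
Qed.

Lemma sub_F {n} {B : {fset expo n}} (G : rel B) :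
  irreflexive G -> subgraph G (F_of G).
Proof.
move=> irr b c Gbc; rewrite /F_of.
have -> : b != c by apply/eqP => e; move: Gbc; rewrite e irr.
apply/existsP; exists b; apply/existsP; exists c.
by rewrite Gbc orbT eqxx.
Qed.

Theorem theorem7p2 (R : realType) (n : nat) (f : mpoly.mpoly n R)
    (B : {fset expo n}) (ext : rel B -> rel B) :
  chordal_ext_op ext ->
  (forall s : nat, (1 <= s)%N -> (f_ts ext f s <= f_ts ext f s.+1)%E) /\
  (forall s : nat, (1 <= s)%N -> (f_ts ext f s <= f_mom B f)%E).
Proof.
move=> hext; split => s hs.
- case: s hs => // s _.
  have [g1 _ _ _] := hext _ (F_graph (G_seq ext f s)).
  have [_ _ sub2 _] := hext _ (F_graph (G_seq ext f s.+1)).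
  have sub : subgraph (G_seq ext f s.+1) (G_seq ext f s.+2).
    move=> b c h; apply: sub2; apply: sub_F => //; by case: g1.
  apply: le_ereal_inf => x [y [hy y0] <-].
  by exists y => //; split => //; apply: proj_sub hy.
- apply: le_ereal_inf => x [y [hy y0] <-].
  by exists y => //; split => //; apply: proj_full.
Qed.
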